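(* Let $k,d>0$, $b,\tilde b\ge0$ be constants and $\eta_1,\eta_2,c_1,c_2,\tilde c_1,\tilde c_2\ge0$, with $c_1^{tot}:=\eta_1+c_1>0$, $c_2^{tot}:=\eta_2+c_2$, $\tilde c_2>0$, and $b/k+\tilde b/d<1$. Consider $$\frac{dN_1}{dt}=-\big(k+c_1^{tot}N_1+c_2^{tot}N_2\big)N_1+bN_1+\tilde bN_2,\qquad \frac{dN_2}{dt}=-\big(d+\tilde c_1N_1+\tilde c_2N_2\big)N_2+\big(k+\eta_1N_1+\eta_2N_2\big)N_1,$$ with nonnegative initial data. Then, for $\tilde b$ small enough (relative to the other parameters), $(0,0)$ is the unique steady state in $\mathbb{R}_+^2$ and it is stable; moreover every trajectory converges to $(0,0)$. *)

(* Defs.v *)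
From Stdlib Require Import Reals.
Open Scope R_scope.

Definition F1 (k b bt eta1 eta2 c1 c2 : R) (N1 N2 : R) : R :=
  - (k + (eta1 + c1) * N1 + (eta2 + c2) * N2) * N1 + b * N1 + bt * N2.

Definition F2 (k d eta1 eta2 ct1 ct2 : R) (N1 N2 : R) : R :=
  - (d + ct1 * N1 + ct2 * N2) * N2 + (k + eta1 * N1 + eta2 * N2) * N1.

Definition is_solution (k d b bt eta1 eta2 c1 c2 ct1 ct2 : R)
    (N1 N2 : R -> R) : Prop :=
  (forall eps, 0 < eps -> exists delta, 0 < delta /\
      forall t, 0 <= t < delta ->
        Rabs (N1 t - N1 0) < eps /\ Rabs (N2 t - N2 0) < eps) /\
  (forall t, 0 < t ->
      derivable_pt_lim N1 t (F1 k b bt eta1 eta2 c1 c2 (N1 t) (N2 t)) /\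
      derivable_pt_lim N2 t (F2 k d eta1 eta2 ct1 ct2 (N1 t) (N2 t))).

(* Main.v *)
Require Import Defs.
From Stdlib Require Import Reals Lra Psatz.
Open Scope R_scope.

Definition ext (f : R -> R) (t : R) := f (Rmax 0 t).

Definition msq x := (Rmin x 0) ^ 2.

Lemma ext_eq f t : 0 <= t -> ext f t = f t.
Proof. intro H; unfold ext; rewrite Rmax_right; auto. Qed.

Lemma ext_cont0 (f : R -> R) :
  (forall eps, 0 < eps -> exists delta, 0 < delta /\
      forall t, 0 <= t < delta -> Rabs (f t - f 0) < eps) ->
  continuity_pt (ext f) 0.
Proof.
  intros H eps Heps. destruct (H eps Heps) as [dl [Hd Ht]].
  exists dl; split; auto. intros x [_ Hx]. simpl in *. unfold R_dist in *.
  unfold ext. rewrite (Rmax_left 0 0) by lra.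
  destruct (Rle_dec x 0).
  - rewrite Rmax_left by lra. rewrite Rminus_diag, Rabs_R0; lra.
  - rewrite Rmax_right by lra. apply Ht. rewrite Rminus_0_r in Hx.
    rewrite Rabs_right in Hx; lra.
Qed.

Lemma ext_deriv f l t : 0 < t -> derivable_pt_lim f t l -> derivable_pt_lim (ext f) t l.
Proof.
  intros Ht H eps Heps. destruct (H eps Heps) as [dl Hd].
  assert (Hp : 0 < Rmin dl t) by (apply Rmin_pos; [apply cond_pos| lra]).
  exists (mkposreal _ Hp). intros h Hh Hlt. simpl in Hlt.
  assert (Hm1 := Rmin_l dl t). assert (Hm2 := Rmin_r dl t).
  assert (Ha := Rle_abs h). assert (Hb := Rle_abs (-h)). rewrite Rabs_Ropp in Hb.
  rewrite !ext_eq by lra. apply Hd; auto. lra.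
Qed.

Lemma ext_cont f t : 0 < t -> (exists l, derivable_pt_lim f t l) -> continuity_pt (ext f) t.
Proof.
  intros Ht [l Hl]. apply derivable_continuous_pt. exists l. apply ext_deriv; auto.
Qed.


Lemma msq_deriv x : derivable_pt_lim msq x (2 * Rmin x 0).
Proof.
  intros eps Heps. unfold msq.
  destruct (Rtotal_order x 0) as [Hx|[Hx|Hx]].
  - assert (Hp : 0 < Rmin eps (-x)) by (apply Rmin_pos; lra).
    exists (mkposreal _ Hp). intros h Hh Hlt. simpl in Hlt.
    assert (Hm1 := Rmin_l eps (-x)). assert (Hm2 := Rmin_r eps (-x)).
    assert (Ha := Rle_abs h). assert (Hb := Rle_abs (-h)). rewrite Rabs_Ropp in Hb.
    rewrite !Rmin_left by lra.
    replace (((x + h) ^ 2 - x ^ 2) / h - 2 * x) with h by (field; auto). lra.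
  - subst. exists (mkposreal _ Heps). intros h Hh Hlt. simpl in Hlt.
    rewrite (Rmin_left 0 0) by lra. rewrite Rplus_0_l.
    destruct (Rle_dec h 0).
    + rewrite Rmin_left by lra.
      replace ((h ^ 2 - 0 ^ 2) / h - 2 * 0) with h by (field; auto). auto.
    + rewrite Rmin_right by lra.
      replace ((0 ^ 2 - 0 ^ 2) / h - 2 * 0) with 0 by (field; auto).
      rewrite Rabs_R0; lra.
  - assert (Hp : 0 < Rmin eps x) by (apply Rmin_pos; lra).
    exists (mkposreal _ Hp). intros h Hh Hlt. simpl in Hlt.
    assert (Hm1 := Rmin_l eps x). assert (Hm2 := Rmin_r eps x).
    assert (Ha := Rle_abs h). assert (Hb := Rle_abs (-h)). rewrite Rabs_Ropp in Hb.
    rewrite !Rmin_right by lra.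
    replace ((0 ^ 2 - 0 ^ 2) / h - 2 * 0) with 0 by (field; auto).
    rewrite Rabs_R0; lra.
Qed.

Lemma msq_cont x : continuity_pt msq x.
Proof. apply derivable_continuous_pt. exists (2 * Rmin x 0). apply msq_deriv. Qed.

Lemma dexp_lin a t : derivable_pt_lim (fun t => exp (a * t)) t (a * exp (a * t)).
Proof.
  assert (H1 : derivable_pt_lim (mult_real_fct a id) t (a * 1)).
  { apply derivable_pt_lim_scal. apply derivable_pt_lim_id. }
  assert (H := derivable_pt_lim_comp _ exp t _ _ H1 (derivable_pt_lim_exp _)).
  unfold comp, mult_real_fct, id in H. replace (a * exp (a * t)) with (exp (a * t) * (a * 1)) by ring.
  exact H.
Qed.

Lemma cexp_lin a t : continuity_pt (fun t => exp (a * t)) t.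
Proof. apply derivable_continuous_pt. exists (a * exp (a * t)). apply dexp_lin. Qed.

Lemma nonincr g g' a b : a < b -> (forall c, a <= c <= b -> continuity_pt g c) ->
  (forall c, a < c < b -> derivable_pt_lim g c (g' c)) ->
  (forall c, a < c < b -> g' c <= 0) -> g b <= g a.
Proof.
  intros Hab Hc Hd Hn.
  pose (pr1 := fun c (P : a < c < b) => exist (fun l => derivable_pt_lim g c l) (g' c) (Hd c P)).
  pose (pr2 := fun c (P : a < c < b) => derivable_pt_id c).
  destruct (MVT g id a b pr1 pr2 Hab Hc (fun c _ => derivable_continuous_pt _ _ (derivable_pt_id c)))
    as [c [P HP]].
  unfold pr1, pr2 in HP. simpl in HP.
  rewrite derive_pt_id in HP. unfold id in HP.
  assert (Hc' := Hn c P). nra.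
Qed.

Lemma key k d b bt eta1 eta2 c1 c2 ct1 ct2 al g x y :
  0 <= eta1 -> 0 <= eta2 -> 0 <= c1 -> 0 <= c2 -> 0 <= ct1 -> 0 <= ct2 ->
  0 <= al <= 1 -> 0 <= x -> 0 <= y ->
  -k + b + al * k <= - g -> bt - al * d <= - g * al ->
  F1 k b bt eta1 eta2 c1 c2 x y + al * F2 k d eta1 eta2 ct1 ct2 x y <= - g * (x + al * y).
Proof.
  intros. unfold F1, F2.
  assert (E : - (k + (eta1 + c1) * x + (eta2 + c2) * y) * x + b * x + bt * y +
    al * (- (d + ct1 * x + ct2 * y) * y + (k + eta1 * x + eta2 * y) * x) + g * (x + al * y)
    = x * (-k + b + al * k + g) + y * (bt - al * d + g * al)
      - x * x * ((1 - al) * eta1 + c1) - x * y * ((1 - al) * eta2 + c2 + al * ct1)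
      - al * ct2 * (y * y)) by ring.
  assert (T1 : x * (-k + b + al * k + g) <= 0) by (assert (0 <= x) by lra; nra).
  assert (T2 : y * (bt - al * d + g * al) <= 0) by (assert (0 <= y) by lra; nra).
  assert (T3 : 0 <= x * x * ((1 - al) * eta1 + c1)).
  { apply Rmult_le_pos; [nra|]. nra. }
  assert (T4 : 0 <= x * y * ((1 - al) * eta2 + c2 + al * ct1)).
  { apply Rmult_le_pos; [nra|]. nra. }
  assert (T5 : 0 <= al * ct2 * (y * y)).
  { apply Rmult_le_pos; [nra|]. nra. }
  lra.
Qed.


Lemma posineq k d b bt eta1 eta2 c1 c2 ct1 ct2 B u v :
  0 < k -> 0 < d -> 0 <= b -> 0 <= bt ->
  0 <= eta1 -> 0 <= eta2 -> 0 <= c1 -> 0 <= c2 -> 0 <= ct1 -> 0 <= ct2 ->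
  -B <= u <= B -> -B <= v <= B ->
  2 * Rmin u 0 * F1 k b bt eta1 eta2 c1 c2 u v + 2 * Rmin v 0 * F2 k d eta1 eta2 ct1 ct2 u v
  <= (2 * (k + b + (eta1 + c1) * B + (eta2 + c2) * B) + bt + 2 * (d + ct1 * B + ct2 * B)
      + 2 * eta2 * B + (k + eta1 * B + eta2 * B)) * (msq u + msq v).
Proof.
  intros. unfold msq, F1, F2.
  set (K1 := k + b + (eta1 + c1) * B + (eta2 + c2) * B).
  set (K2 := d + ct1 * B + ct2 * B).
  set (K3 := k + eta1 * B + eta2 * B).
  assert (B0 : 0 <= B) by lra.
  assert (K1p : 0 <= K1) by (unfold K1; nra).
  assert (K2p : 0 <= K2) by (unfold K2; nra).
  assert (K3p : 0 <= K3) by (unfold K3; nra).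
  assert (A1 : - (k + (eta1 + c1) * u + (eta2 + c2) * v) + b <= K1) by (unfold K1; nra).
  assert (A2 : - (d + ct1 * u + ct2 * v) <= K2) by (unfold K2; nra).
  assert (A3 : k + eta1 * u + eta2 * v <= K3) by (unfold K3; nra).
  assert (A4 : - (k + eta1 * u + eta2 * v) <= K3) by (unfold K3; nra).
  replace (- (k + (eta1 + c1) * u + (eta2 + c2) * v) * u + b * u + bt * v)
    with ((- (k + (eta1 + c1) * u + (eta2 + c2) * v) + b) * u + bt * v) by ring.
  revert A1 A2 A3 A4.
  generalize (- (k + (eta1 + c1) * u + (eta2 + c2) * v) + b) as P.
  generalize (d + ct1 * u + ct2 * v) as Q.
  intros Q P A1 A2 A3 A4.
  set (M := 2 * K1 + bt + 2 * K2 + 2 * eta2 * B + K3).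
  destruct (Rle_dec 0 u) as [Hu|Hu]; destruct (Rle_dec 0 v) as [Hv|Hv].
  - rewrite !Rmin_right by lra. lra.
  - rewrite (Rmin_right u 0) by lra. rewrite (Rmin_left v 0) by lra.
    assert (T1 : - Q * v * v <= K2 * (v * v)) by nra.
    assert (T2 : (k + eta1 * u) * u * v <= 0).
    { assert (0 <= (k + eta1 * u) * u) by nra. nra. }
    assert (T3 : eta2 * u * (v * v) <= eta2 * B * (v * v)).
    { apply Rmult_le_compat_r; [nra|]. nra. }
    assert (Mge : 2 * K2 + 2 * eta2 * B <= M) by (unfold M; nra).
    assert (vv : 0 <= v * v) by nra.
    assert (T4 : (2 * K2 + 2 * eta2 * B) * (v * v) <= M * (v * v)) by nra.
    replace (0 ^ 2 + v ^ 2) with (v * v) by ring.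
    replace (2 * 0 * (P * u + bt * v) + 2 * v * (- Q * v + (k + eta1 * u + eta2 * v) * u))
      with (2 * (- Q * v * v) + 2 * ((k + eta1 * u) * u * v) + 2 * (eta2 * u * (v * v))) by ring.
    lra.
  - rewrite (Rmin_left u 0) by lra. rewrite (Rmin_right v 0) by lra.
    assert (T1 : P * u * u <= K1 * (u * u)) by nra.
    assert (T2 : bt * u * v <= 0).
    { assert (u * v <= 0) by nra. nra. }
    assert (uu : 0 <= u * u) by nra.
    assert (Mge : 2 * K1 <= M) by (unfold M; nra).
    assert (T4 : (2 * K1) * (u * u) <= M * (u * u)) by nra.
    replace (u ^ 2 + 0 ^ 2) with (u * u) by ring.
    replace (2 * u * (P * u + bt * v) + 2 * 0 * (- Q * v + (k + eta1 * u + eta2 * v) * u))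
      with (2 * (P * u * u) + 2 * (bt * u * v)) by ring.
    lra.
  - rewrite (Rmin_left u 0) by lra. rewrite (Rmin_left v 0) by lra.
    assert (uv : 0 <= u * v) by nra.
    assert (uu : 0 <= u * u) by nra.
    assert (vv : 0 <= v * v) by nra.
    assert (T1 : P * u * u <= K1 * (u * u)) by nra.
    assert (T2 : - Q * v * v <= K2 * (v * v)) by nra.
    assert (T3 : 2 * (u * v) <= u * u + v * v) by (assert (0 <= (u - v) * (u - v)) by apply Rle_0_sqr; lra).
    assert (T4 : 2 * bt * (u * v) <= bt * (u * u + v * v)) by nra.
    set (C := k + eta1 * u + eta2 * v) in *.
    assert (T5 : 2 * C * (u * v) <= K3 * (u * u + v * v)).
    { assert (C * (u * v) <= K3 * (u * v)) by (apply Rmult_le_compat_r; lra).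
      assert (K3 * (2 * (u * v)) <= K3 * (u * u + v * v)) by (apply Rmult_le_compat_l; lra). lra. }
    assert (T6 : 0 <= 2 * eta2 * B * (u * u + v * v)) by (repeat apply Rmult_le_pos; lra).
    assert (T7 : 2 * K1 * (u * u) + 2 * K2 * (v*v) <= (2 * K1 + 2 * K2) * (u * u + v * v)).
    { assert (0 <= K1 * (v * v)) by (apply Rmult_le_pos; lra). assert (0 <= K2 * (u * u)) by (apply Rmult_le_pos; lra). lra. }
    replace (u ^ 2 + v ^ 2) with (u * u + v * v) by ring.
    replace (2 * u * (P * u + bt * v) + 2 * v * (- Q * v + C * u))
      with (2 * (P * u * u) + 2 * bt * (u * v) + 2 * (- Q * v * v) + 2 * C * (u * v)) by ring.
    assert (T8 : 0 <= bt * (u * u + v * v)) by (apply Rmult_le_pos; lra).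
    unfold M. lra.
Qed.

Lemma traj k d b bt eta1 eta2 c1 c2 ct1 ct2 al g N1 N2 :
  0 < k -> 0 < d -> 0 <= b -> 0 <= bt ->
  0 <= eta1 -> 0 <= eta2 -> 0 <= c1 -> 0 <= c2 -> 0 <= ct1 -> 0 <= ct2 -> 0 <= al ->
  (forall x y, 0 <= x -> 0 <= y ->
     F1 k b bt eta1 eta2 c1 c2 x y + al * F2 k d eta1 eta2 ct1 ct2 x y <= - g * (x + al * y)) ->
  is_solution k d b bt eta1 eta2 c1 c2 ct1 ct2 N1 N2 ->
  0 <= N1 0 -> 0 <= N2 0 ->
  forall t, 0 <= t -> 0 <= N1 t /\ 0 <= N2 t /\
     (N1 t + al * N2 t) * exp (g * t) <= N1 0 + al * N2 0.
Proof.
  intros Hk Hd Hb Hbt He1 He2 Hc1 Hc2 Hct1 Hct2 Hal KEY [Hc Hder] H10 H20.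
  set (u := ext N1). set (v := ext N2).
  assert (Eu : forall t, 0 <= t -> u t = N1 t) by (intros; apply ext_eq; auto).
  assert (Ev : forall t, 0 <= t -> v t = N2 t) by (intros; apply ext_eq; auto).
  assert (Du : forall c, 0 < c -> derivable_pt_lim u c (F1 k b bt eta1 eta2 c1 c2 (u c) (v c))).
  { intros c Hc0. rewrite Eu, Ev by lra. apply ext_deriv; auto. apply (Hder c Hc0). }
  assert (Dv : forall c, 0 < c -> derivable_pt_lim v c (F2 k d eta1 eta2 ct1 ct2 (u c) (v c))).
  { intros c Hc0. rewrite Eu, Ev by lra. apply ext_deriv; auto. apply (Hder c Hc0). }
  assert (Cu : forall c, 0 <= c -> continuity_pt u c).
  { intros c Hc0. destruct (Req_dec c 0) as [->|Hne].
    - apply ext_cont0. intros eps Heps. destruct (Hc eps Heps) as [dl [Hdl Ht]].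
      exists dl; split; auto. intros t Ht'. apply (Ht t Ht').
    - apply ext_cont; [lra|]. eexists; apply (Hder c); lra. }
  assert (Cv : forall c, 0 <= c -> continuity_pt v c).
  { intros c Hc0. destruct (Req_dec c 0) as [->|Hne].
    - apply ext_cont0. intros eps Heps. destruct (Hc eps Heps) as [dl [Hdl Ht]].
      exists dl; split; auto. intros t Ht'. apply (Ht t Ht').
    - apply ext_cont; [lra|]. eexists; apply (Hder c); lra. }
  assert (Pos : forall t, 0 <= t -> 0 <= u t /\ 0 <= v t).
  { intros t Ht. destruct (Req_dec t 0) as [->|Hne].
    { rewrite Eu, Ev by lra. auto. }
    assert (Htp : 0 < t) by lra.
    destruct (continuity_ab_maj u 0 t Ht (fun c H => Cu c (proj1 H))) as [a1 [Ha1 _]].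
    destruct (continuity_ab_min u 0 t Ht (fun c H => Cu c (proj1 H))) as [a2 [Ha2 _]].
    destruct (continuity_ab_maj v 0 t Ht (fun c H => Cv c (proj1 H))) as [a3 [Ha3 _]].
    destruct (continuity_ab_min v 0 t Ht (fun c H => Cv c (proj1 H))) as [a4 [Ha4 _]].
    set (B := Rabs (u a1) + Rabs (u a2) + Rabs (v a3) + Rabs (v a4)).
    assert (Bnd : forall c, 0 <= c <= t -> (-B <= u c <= B) /\ (-B <= v c <= B)).
    { intros c Hct. specialize (Ha1 c Hct). specialize (Ha2 c Hct).
      specialize (Ha3 c Hct). specialize (Ha4 c Hct).
      assert (X1 := Rle_abs (u a1)). assert (X2 := Rle_abs (- u a2)).
      assert (X3 := Rle_abs (v a3)). assert (X4 := Rle_abs (- v a4)).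
      rewrite Rabs_Ropp in X2, X4.
      assert (P1 := Rabs_pos (u a1)). assert (P2 := Rabs_pos (u a2)).
      assert (P3 := Rabs_pos (v a3)). assert (P4 := Rabs_pos (v a4)).
      unfold B. lra. }
    set (M := 2 * (k + b + (eta1 + c1) * B + (eta2 + c2) * B) + bt + 2 * (d + ct1 * B + ct2 * B)
      + 2 * eta2 * B + (k + eta1 * B + eta2 * B)).
    set (G := fun s => (msq (u s) + msq (v s)) * exp (- M * s)).
    set (G' := fun s => (2 * Rmin (u s) 0 * F1 k b bt eta1 eta2 c1 c2 (u s) (v s)
                        + 2 * Rmin (v s) 0 * F2 k d eta1 eta2 ct1 ct2 (u s) (v s)) * exp (- M * s)
                       + (msq (u s) + msq (v s)) * (- M * exp (- M * s))).
    assert (HG : G t <= G 0).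
    { apply (nonincr G G'); auto.
      - intros c Hct. unfold G.
        assert (A1 : continuity_pt (fun s => msq (u s)) c)
          by exact (continuity_pt_comp u msq c (Cu c (proj1 Hct)) (msq_cont _)).
        assert (A2 : continuity_pt (fun s => msq (v s)) c)
          by exact (continuity_pt_comp v msq c (Cv c (proj1 Hct)) (msq_cont _)).
        assert (A3 := continuity_pt_plus _ _ c A1 A2).
        exact (continuity_pt_mult _ _ c A3 (cexp_lin (- M) c)).
      - intros c Hct. unfold G, G'.
        assert (A1 := derivable_pt_lim_comp u msq c _ _ (Du c (proj1 Hct)) (msq_deriv _)).
        assert (A2 := derivable_pt_lim_comp v msq c _ _ (Dv c (proj1 Hct)) (msq_deriv _)).
        assert (A3 := derivable_pt_lim_plus _ _ c _ _ A1 A2).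
        exact (derivable_pt_lim_mult _ _ c _ _ A3 (dexp_lin (- M) c)).
      - intros c Hct. unfold G'.
        destruct (Bnd c (conj (Rlt_le _ _ (proj1 Hct)) (Rlt_le _ _ (proj2 Hct)))) as [B1 B2].
        assert (X := posineq k d b bt eta1 eta2 c1 c2 ct1 ct2 B (u c) (v c)
                       Hk Hd Hb Hbt He1 He2 Hc1 Hc2 Hct1 Hct2 B1 B2).
        fold M in X.
        assert (E := exp_pos (- M * c)).
        set (L := 2 * Rmin (u c) 0 * F1 k b bt eta1 eta2 c1 c2 (u c) (v c) +
                  2 * Rmin (v c) 0 * F2 k d eta1 eta2 ct1 ct2 (u c) (v c)) in *.
        set (H := msq (u c) + msq (v c)) in *.
        replace (L * exp (- M * c) + H * (- M * exp (- M * c)))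
          with (exp (- M * c) * (L - M * H)) by ring.
        assert (L - M * H <= 0) by lra. nra. }
    unfold G in HG. rewrite Rmult_0_r, exp_0, Rmult_1_r in HG.
    assert (Z : msq (u 0) + msq (v 0) = 0).
    { unfold msq. rewrite Eu, Ev by lra. rewrite !Rmin_right by lra. ring. }
    rewrite Z in HG.
    assert (E := exp_pos (- M * t)).
    assert (S1 : 0 <= msq (u t)) by (unfold msq; apply pow2_ge_0).
    assert (S2 : 0 <= msq (v t)) by (unfold msq; apply pow2_ge_0).
    assert (S : msq (u t) + msq (v t) <= 0) by nra.
    unfold msq in S, S1, S2.
    split.
    - destruct (Rle_dec 0 (u t)); auto. rewrite Rmin_left in S, S1 by lra. nra.
    - destruct (Rle_dec 0 (v t)); auto. rewrite (Rmin_left (v t)) in S, S2 by lra. nra. }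
  intros t Ht. destruct (Pos t Ht) as [P1 P2]. rewrite Eu in P1 by lra. rewrite Ev in P2 by lra.
  split; auto. split; auto.
  destruct (Req_dec t 0) as [->|Hne].
  { rewrite Rmult_0_r, exp_0, Rmult_1_r. lra. }
  set (W := fun s => (u s + al * v s) * exp (g * s)).
  set (W' := fun s => (F1 k b bt eta1 eta2 c1 c2 (u s) (v s) + al * F2 k d eta1 eta2 ct1 ct2 (u s) (v s))
                       * exp (g * s) + (u s + al * v s) * (g * exp (g * s))).
  assert (HW : W t <= W 0).
  { apply (nonincr W W'); [lra| | |].
    - intros c Hct. unfold W.
      assert (A2 := continuity_pt_scal _ al c (Cv c (proj1 Hct))).
      assert (A3 := continuity_pt_plus _ _ c (Cu c (proj1 Hct)) A2).
      exact (continuity_pt_mult _ _ c A3 (cexp_lin g c)).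
    - intros c Hct. unfold W, W'.
      assert (A2 := derivable_pt_lim_scal _ al c _ (Dv c (proj1 Hct))).
      assert (A3 := derivable_pt_lim_plus _ _ c _ _ (Du c (proj1 Hct)) A2).
      exact (derivable_pt_lim_mult _ _ c _ _ A3 (dexp_lin g c)).
    - intros c Hct. unfold W'.
      destruct (Pos c (Rlt_le _ _ (proj1 Hct))) as [Q1 Q2].
      assert (X := KEY _ _ Q1 Q2).
      assert (E := exp_pos (g * c)).
      set (L := F1 k b bt eta1 eta2 c1 c2 (u c) (v c) + al * F2 k d eta1 eta2 ct1 ct2 (u c) (v c)) in *.
      replace (L * exp (g * c) + (u c + al * v c) * (g * exp (g * c)))
        with (exp (g * c) * (L + g * (u c + al * v c))) by ring.
      assert (L + g * (u c + al * v c) <= 0) by lra. nra. }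
  unfold W in HW. rewrite Rmult_0_r, exp_0, Rmult_1_r in HW.
  rewrite !Eu, !Ev in HW by lra. exact HW.
Qed.

Lemma div_nonneg a c : 0 <= a -> 0 < c -> 0 <= a / c.
Proof. intros; unfold Rdiv; apply Rmult_le_pos; [lra| left; apply Rinv_0_lt_compat; lra]. Qed.

Theorem theorem6 :
  forall k d b eta1 eta2 c1 c2 ct1 ct2 : R,
    0 < k -> 0 < d -> 0 <= b ->
    0 <= eta1 -> 0 <= eta2 -> 0 <= c1 -> 0 <= c2 -> 0 <= ct1 -> 0 <= ct2 ->
    0 < eta1 + c1 -> 0 < ct2 ->
    exists bt0 : R, 0 < bt0 /\
    forall bt : R, 0 <= bt -> bt < bt0 -> b / k + bt / d < 1 ->
      (F1 k b bt eta1 eta2 c1 c2 0 0 = 0 /\ F2 k d eta1 eta2 ct1 ct2 0 0 = 0) /\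
      (forall x y : R, 0 <= x -> 0 <= y ->
         F1 k b bt eta1 eta2 c1 c2 x y = 0 -> F2 k d eta1 eta2 ct1 ct2 x y = 0 ->
         x = 0 /\ y = 0) /\
      (forall eps : R, 0 < eps -> exists delta : R, 0 < delta /\
         forall N1 N2 : R -> R,
           is_solution k d b bt eta1 eta2 c1 c2 ct1 ct2 N1 N2 ->
           0 <= N1 0 -> 0 <= N2 0 -> N1 0 < delta -> N2 0 < delta ->
           forall t : R, 0 <= t -> Rabs (N1 t) < eps /\ Rabs (N2 t) < eps) /\
      (forall N1 N2 : R -> R,
         is_solution k d b bt eta1 eta2 c1 c2 ct1 ct2 N1 N2 ->
         0 <= N1 0 -> 0 <= N2 0 ->
         forall eps : R, 0 < eps -> exists T : R,
           forall t : R, T <= t -> Rabs (N1 t) < eps /\ Rabs (N2 t) < eps).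
Proof.
  intros k d b eta1 eta2 c1 c2 ct1 ct2 Hk Hd Hb He1 He2 Hc1 Hc2 Hct1 Hct2 _ _.
  exists 1. split; [lra|]. intros bt Hbt _ Hcond.
  set (p := b / k). set (q := bt / d).
  assert (Ep : b = p * k) by (unfold p; field; lra).
  assert (Eq : bt = q * d) by (unfold q; field; lra).
  assert (Hp : 0 <= p) by (unfold p; apply div_nonneg; lra).
  assert (Hq : 0 <= q) by (unfold q; apply div_nonneg; lra).
  fold p q in Hcond.
  set (al := (1 - p + q) / 2). set (s := 1 - p - q). set (m := Rmin k d).
  assert (Hm1 : m <= k) by apply Rmin_l. assert (Hm2 : m <= d) by apply Rmin_r.
  assert (Hm : 0 < m) by (apply Rmin_pos; lra).
  assert (Hs : 0 < s) by (unfold s; lra).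
  assert (Hal : 0 < al <= 1) by (unfold al; lra).
  set (g := s * m / 2).
  assert (Hg : 0 < g) by (unfold g; nra).
  assert (L1 : -k + b + al * k <= - g).
  { rewrite Ep. replace (-k + p * k + al * k) with (- (k * s) / 2) by (unfold al, s; field).
    unfold g. assert (s * m <= s * k) by nra. lra. }
  assert (L2 : bt - al * d <= - g * al).
  { rewrite Eq. replace (q * d - al * d) with (- (d * s) / 2) by (unfold al, s; field).
    unfold g. assert (m * al <= d) by nra. assert (s * (m * al) <= s * d) by nra. nra. }
  assert (KEY : forall x y, 0 <= x -> 0 <= y ->
     F1 k b bt eta1 eta2 c1 c2 x y + al * F2 k d eta1 eta2 ct1 ct2 x y <= - g * (x + al * y)).
  { intros x y Hx Hy. apply key; auto; lra. }
  split; [|split; [|split]].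
  - unfold F1, F2; split; ring.
  - intros x y Hx Hy E1 E2. assert (X := KEY x y Hx Hy). rewrite E1, E2 in X.
    assert (x + al * y <= 0) by nra. split; nra.
  - intros eps Heps. exists (eps * al / 2). split; [nra|].
    intros N1 N2 Hsol H10 H20 Hd1 Hd2 t Ht.
    destruct (traj k d b bt eta1 eta2 c1 c2 ct1 ct2 al g N1 N2 Hk Hd Hb Hbt He1 He2 Hc1 Hc2
                Hct1 Hct2 (proj1 (conj (Rlt_le _ _ (proj1 Hal)) I)) KEY Hsol H10 H20 t Ht) as [P1 [P2 W]].
    assert (E := exp_ineq1_le (g * t)).
    assert (E2 : 1 <= exp (g * t)) by nra.
    assert (A0 : 0 <= al * N2 t) by (apply Rmult_le_pos; lra).
    assert (A1 : 0 <= (N1 t + al * N2 t) * (exp (g * t) - 1)) by (apply Rmult_le_pos; lra).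
    assert (V : N1 t + al * N2 t <= N1 0 + al * N2 0) by lra.
    assert (A2 : al * N2 0 <= al * (eps * al / 2)) by (apply Rmult_le_compat_l; lra).
    assert (A3 : al * (eps * al / 2) <= eps * al / 2) by (assert (0 <= eps * al) by nra; nra).
    assert (A4 : eps * al <= eps) by nra.
    assert (A5 : al * N2 t < al * eps) by lra.
    rewrite !Rabs_right by lra. split; [lra|].
    destruct (Rlt_le_dec (N2 t) eps); auto.
    assert (al * eps <= al * N2 t) by (apply Rmult_le_compat_l; lra). lra.
  - intros N1 N2 Hsol H10 H20 eps Heps.
    set (V0 := N1 0 + al * N2 0).
    assert (HV0 : 0 <= V0) by (unfold V0; nra).
    set (r := eps * al). assert (Hr : 0 < r) by (unfold r; nra).
    exists (V0 / (g * r)). intros t Ht.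
    assert (HT : 0 <= V0 / (g * r)) by (apply div_nonneg; nra).
    assert (Ht0 : 0 <= t) by lra.
    destruct (traj k d b bt eta1 eta2 c1 c2 ct1 ct2 al g N1 N2 Hk Hd Hb Hbt He1 He2 Hc1 Hc2
                Hct1 Hct2 (Rlt_le _ _ (proj1 Hal)) KEY Hsol H10 H20 t Ht0) as [P1 [P2 W]].
    fold V0 in W.
    assert (E := exp_ineq1_le (g * t)).
    assert (gt : V0 <= g * t * r).
    { assert (g * t >= g * (V0 / (g * r))) by nra.
      replace (g * (V0 / (g * r))) with (V0 / r) in H by (field; lra).
      assert (V0 / r * r = V0) by (field; lra). nra. }
    set (Vt := N1 t + al * N2 t) in *.
    assert (Vt0 : 0 <= Vt) by (unfold Vt; nra).
    assert (Vr : Vt < r).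
    { destruct (Rlt_le_dec Vt r); auto.
      assert (Vt * (1 + g * t) <= V0) by nra. nra. }
    unfold Vt, r in *. rewrite !Rabs_right by lra. split; nra.
Qed.
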